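(* Let $p$ be a prime, $\alpha,\beta\in\overline{\mathbf F_p}$ with $\alpha\ne0$, and let $k,N$ be integers with $0\le k<N<p$. (i) There exists $\lambda\in\mathbf F_p(\alpha^N)$ such that $|\mathbf F_p((\beta+\lambda\alpha^k)^N)|\ge|\mathbf F_p(\alpha^N)|$. (ii) If $\mathbf F_p(\alpha^N)\ne\mathbf F_p(\alpha^N,\beta^N,\alpha^k\beta^{N-1})$, then there exists $\lambda\in\mathbf F_p(\alpha^N)$ such that $|\mathbf F_p((\beta+\lambda\alpha^k)^N)|>|\mathbf F_p(\alpha^N)|$.
   Context: $\overline{\mathbf F_p}$ denotes an algebraic closure of the field $\mathbf F_p$ with $p$ elements; $\mathbf F_p(\gamma)$ is the subfield generated by $\gamma$. *)

(* Defs.v *)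
From HB Require Import structures.
From mathcomp Require Import all_boot all_order all_algebra all_field.
Set Implicit Arguments. Unset Strict Implicit. Unset Printing Implicit Defensive.
Import GRing.Theory.
Local Open Scope ring_scope.

(* S is a subfield of the (finite) field L: contains 0 and 1, closed under
   subtraction, multiplication and inversion (x^-1 of 0 is 0 in mathcomp). *)
Definition is_subfield (L : finFieldType) (S : {set L}) : bool :=
  [&& (0 : L) \in S, (1 : L) \in S,
      [forall x in S, forall y in S, (x - y \in S) && (x * y \in S)]
    & [forall x in S, x^-1 \in S]].

Definition Fgen (L : finFieldType) (A : {set L}) : {set L} :=
  \bigcap_(S : {set L} | is_subfield S && (A \subset S)) S.

Definition Fgen1 (L : finFieldType) (g : L) : {set L} := Fgen [set g].

(* Main.v *)
Require Import Defs.
From HB Require Import structures.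
From mathcomp Require Import all_boot all_order all_algebra all_field all_fingroup.
From mathcomp Require Import zify.
Set Implicit Arguments. Unset Strict Implicit. Unset Printing Implicit Defensive.
Import GRing.Theory.
Local Open Scope ring_scope.

Lemma card_bigcup_le (I T : finType) (P : pred I) (F : I -> {set T}) :
  (#|\bigcup_(i | P i) F i| <= \sum_(i | P i) #|F i|)%N.
Proof.
apply: (big_ind2 (fun (A : {set T}) n => #|A| <= n)%N) => //.
  by rewrite cards0.
move=> A1 n1 A2 n2 h1 h2; rewrite cardsU.
apply: leq_trans (leq_subr _ _) _; exact: leq_add.
Qed.

Section S.
Variable L : finFieldType.
Implicit Types S T : {set L}.

Lemma sf0 S : is_subfield S -> 0 \in S. Proof. by case/and4P. Qed.
Lemma sf1 S : is_subfield S -> 1 \in S. Proof. by case/and4P. Qed.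
Lemma sfB S x y : is_subfield S -> x \in S -> y \in S -> x - y \in S.
Proof. by case/and4P=> _ _ /forallP/(_ x)/implyP H _ xS yS; case/andP: (implyP (forallP (H xS) y) yS). Qed.
Lemma sfM S x y : is_subfield S -> x \in S -> y \in S -> x * y \in S.
Proof. by case/and4P=> _ _ /forallP/(_ x)/implyP H _ xS yS; case/andP: (implyP (forallP (H xS) y) yS). Qed.
Lemma sfV S x : is_subfield S -> x \in S -> x^-1 \in S.
Proof. by case/and4P=> _ _ _ /forallP/(_ x)/implyP. Qed.

Lemma Fgen_sf (A : {set L}) : is_subfield (Fgen A).
Proof.
apply/and4P; split.
- by apply/bigcapP => S /andP[/sf0].
- by apply/bigcapP => S /andP[/sf1].
- apply/forallP=> x; apply/implyP=> /bigcapP hx; apply/forallP=> y; apply/implyP=> /bigcapP hy.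
  apply/andP; split; apply/bigcapP => S hS; case/andP: (hS) => sS _.
    by apply: sfB; [| apply: hx | apply: hy].
  by apply: sfM; [| apply: hx | apply: hy].
- apply/forallP=> x; apply/implyP=> /bigcapP hx; apply/bigcapP => S hS.
  by case/andP: (hS) => sS _; apply: sfV => //; apply: hx.
Qed.

Lemma Fgen_sub (A : {set L}) : A \subset Fgen A.
Proof. by apply/subsetP=> x xA; apply/bigcapP => S /andP[_ /subsetP]; apply. Qed.

Lemma Fgen_min (A S : {set L}) : is_subfield S -> A \subset S -> Fgen A \subset S.
Proof. by move=> sS AS; apply: bigcap_inf; rewrite sS AS. Qed.

Lemma sf_exp_card T x : is_subfield T -> x \in T -> x ^+ #|T| = x.
Proof.
move=> sT xT; have T0 := sf0 sT.
have cT : #|T| = #|T :\ 0|.+1 by rewrite (cardsD1 0 T) T0.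
have [->|x0] := eqVneq x 0; first by rewrite cT expr0n.
set T' := T :\ 0.
have im : [set x * y | y in T'] = T'.
  apply/eqP; rewrite eqEcard card_imset; last exact: mulfI.
  rewrite leqnn andbT; apply/subsetP=> z /imsetP[y]; rewrite !inE => /andP[y0 yT] ->.
  by rewrite mulf_eq0 negb_or x0 y0 sfM.
have P0 : \prod_(y in T') y != 0.
  by rewrite prodf_seq_neq0; apply/allP=> y _; apply/implyP; rewrite !inE => /andP[].
have E : \prod_(y in T') y = x ^+ #|T'| * \prod_(y in T') y.
  rewrite -{1}im big_imset /=; last by move=> a b _ _; apply: mulfI.
  by rewrite big_split /= prodr_const.
have : (x ^+ #|T'| - 1) * \prod_(y in T') y = 0 by rewrite mulrBl mul1r -E subrr.
move/eqP; rewrite mulf_eq0 (negbTE P0) orbF subr_eq0 => /eqP h.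
by rewrite cT exprS h mulr1.
Qed.
End S.
Lemma cardL (p : nat) (L : finFieldType) (hchar : p \in [pchar L]) :
  exists n, #|L| = (p ^ n)%N.
Proof. exists (logn p #|pPrimeCharType hchar|). exact: (card_pprimeChar hchar). Qed.
Lemma cardT (p : nat) (L : finFieldType) (hchar : p \in [pchar L]) (T : {set L}) :
  0 \in T -> {in T &, forall x y, x - y \in T} -> exists n, #|T| = (p ^ n)%N.
Proof.
move=> T0 TB.
have TN : {in T, forall x, - x \in T} by move=> x xT; rewrite -sub0r TB.
have gT : group_set T.
  apply/group_setP; split; first exact: T0.
  by move=> x y xT yT; rewrite FinRing.zmodMgE -[y]opprK TB ?TN.
have := cardSg (subsetT (Group gT)). rewrite cardsT /=.
have [n ->] := cardL hchar.
have pr := pcharf_prime hchar.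
by move=> h; have [m _ ->] := (dvdn_pfactor #|T| n pr) h; exists m.
Qed.
Lemma card_Efix (L : finFieldType) (q : nat) : (1 < q)%N -> (#|[set x : L | x ^+ q == x]| <= q)%N.
Proof.
move=> q1; set P : {poly L} := 'X^q - 'X.
have sP : size P = q.+1 by rewrite /P size_polyDl ?size_polyXn // size_polyN size_polyX.
have P0 : P != 0 by rewrite -size_poly_eq0 sP.
have := max_poly_roots P0 (rs := enum [set x : L | x ^+ q == x]).
rewrite enum_uniq -cardE sP ltnS; apply => //.
by apply/allP=> x; rewrite mem_enum inE /root /P !hornerE subr_eq0 => ->.
Qed.
Lemma frobD (p : nat) (L : finFieldType) (hchar : p \in [pchar L]) d (x y : L) :
  (x + y) ^+ (p ^ d) = x ^+ (p ^ d) + y ^+ (p ^ d).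
Proof.
apply: exprDn_pchar; rewrite pnatX (pnatE _ (pcharf_prime hchar)) hchar //.
Qed.

Section P.
Variables (p : nat) (L : finFieldType) (hchar : p \in [pchar L]) (d : nat).
Local Notation q := (p ^ d)%N.

Lemma q_gt0 : (0 < q)%N.
Proof. by rewrite expn_gt0 (prime_gt0 (pcharf_prime hchar)). Qed.

Lemma frob_sum (I : Type) (r : seq I) (P : pred I) (F : I -> L) :
  (\sum_(i <- r | P i) F i) ^+ q = \sum_(i <- r | P i) (F i) ^+ q.
Proof.
apply: (big_morph (fun x : L => x ^+ q)); first by move=> x y; apply: frobD.
by rewrite expr0n eqn0Ngt q_gt0.
Qed.

Lemma frob_nat n : (n%:R : L) ^+ q = n%:R.
Proof.
elim: n => [|n IH]; first by rewrite expr0n eqn0Ngt q_gt0.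
by rewrite -addn1 natrD (frobD hchar) IH expr1n.
Qed.

Lemma Gsize (c b : L) N : c != 0 -> size ((c%:P * 'X + b%:P) ^+ N) = N.+1.
Proof.
move=> c0.
have sQ : size (c%:P * 'X + b%:P) = 2.
  by rewrite size_MXaddC polyC_eq0 (negbTE c0) size_polyC c0.
have lQ : lead_coef (c%:P * 'X + b%:P) = c.
  by rewrite lead_coefE sQ /= coefD coefMX coefC /= coefC addr0.
have G0 : (c%:P * 'X + b%:P) ^+ N != 0.
  by rewrite -lead_coef_eq0 lead_coef_exp lQ expf_neq0.
by rewrite -(prednK (n := size _)) ?size_poly_gt0 // size_exp sQ mul1n.
Qed.

Lemma fiber_card (c b s : L) N : (0 < N)%N -> c != 0 ->
  (#|[set l : L | (c * l + b) ^+ N == s]| <= N)%N.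
Proof.
move=> N0 c0; set P := (c%:P * 'X + b%:P) ^+ N - s%:P.
have sP : size P = N.+1.
  rewrite /P size_polyDl Gsize // size_polyN size_polyC; by case: (s != 0).
have P0 : P != 0 by rewrite -size_poly_eq0 sP.
have := max_poly_roots P0 (rs := enum [set l : L | (c * l + b) ^+ N == s]).
rewrite enum_uniq -cardE sP ltnS; apply => //.
by apply/allP=> x; rewrite mem_enum inE /root /P !hornerE subr_eq0 => ->.
Qed.
Lemma hcount (c b : L) N : (0 < N)%N -> (N < p)%N -> c != 0 ->
  (c ^+ N) ^+ q = c ^+ N ->
  ~ ((b ^+ N) ^+ q = b ^+ N /\ (c * b ^+ (N - 1)) ^+ q = c * b ^+ (N - 1)) ->
  (#|[set l : L | (l ^+ q == l) && (((c * l + b) ^+ N) ^+ q == (c * l + b) ^+ N)]| < N)%N.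
Proof.
move=> N0 Np c0 cfix nfix.
set G := (c%:P * 'X + b%:P) ^+ N.
have sG : size G = N.+1 by apply: Gsize.
have GN : G`_N = c ^+ N.
  have := lead_coef_exp (c%:P * 'X + b%:P) N; rewrite lead_coefE sG /= => ->.
  have sQ : size (c%:P * 'X + b%:P) = 2.
    by rewrite size_MXaddC polyC_eq0 (negbTE c0) size_polyC c0.
  by rewrite lead_coefE sQ /= coefD coefMX coefC /= coefC addr0.
have Gev l : G.[l] = (c * l + b) ^+ N by rewrite /G !hornerE.
set h := \poly_(i < N) (G`_i ^+ q - G`_i).
have hev l : l ^+ q = l -> G.[l] ^+ q - G.[l] = h.[l].
  move=> lfix.
  have E (i : nat) : (G`_i * l ^+ i) ^+ q - G`_i * l ^+ i = (G`_i ^+ q - G`_i) * l ^+ i.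
    by rewrite exprMn -exprM mulnC exprM lfix mulrBl.
  rewrite horner_poly horner_coef sG frob_sum -sumrB.
  under eq_bigr do rewrite E.
  by rewrite big_ord_recr /= GN cfix subrr mul0r addr0.
have h0 : h != 0.
  apply/negP => /eqP h0; apply: nfix; split.
    have := coef_poly N (fun i => G`_i ^+ q - G`_i) 0; rewrite -/h h0 coef0 N0.
    by rewrite -horner_coef0 Gev mulr0 add0r => /esym/eqP; rewrite subr_eq0 => /eqP.
  have G1 : G`_1 = c * b ^+ (N - 1) *+ N.
    have := coef_deriv G 0; rewrite -horner_coef0 /G deriv_exp derivMXaddC derivC.
    by rewrite mul0r addr0 hornerMn hornerCM horner_exp hornerD hornerCM hornerX hornerC mulr0 add0r mulr1n subn1 => <-.
  have NR : (N%:R : L) != 0.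
    by rewrite -(dvdn_pcharf hchar); apply/negP => /(dvdn_leq N0); rewrite leqNgt Np.
  case: (ltnP 1 N) => N1.
    have := coef_poly N (fun i => G`_i ^+ q - G`_i) 1; rewrite -/h h0 coef0 N1.
    move/esym/eqP; rewrite subr_eq0 G1 -mulr_natr exprMn frob_nat => /eqP.
    by move/(mulIf NR).
  have N1' : N = 1%N by apply/eqP; rewrite eqn_leq N1 N0.
  by rewrite N1' subnn expr0 mulr1; move: cfix; rewrite N1' expr1.
have := max_poly_roots h0 (rs := enum [set l : L | (l ^+ q == l) && (((c * l + b) ^+ N) ^+ q == (c * l + b) ^+ N)]).
rewrite enum_uniq -cardE => H; apply: (leq_trans (H _ _)) => //; last exact: size_poly.
apply/allP=> x; rewrite mem_enum inE /root => /andP[/eqP xf /eqP gf].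
by rewrite -hev // Gev gf subrr.
Qed.
End P.

Lemma sf_card (p : nat) (L : finFieldType) (hchar : p \in [pchar L]) (T : {set L}) :
  is_subfield T -> exists2 j, (0 < j)%N & #|T| = (p ^ j)%N.
Proof.
move=> sT; have [n cT] := cardT hchar (sf0 sT) (fun x y => sfB sT).
have two : (2 <= #|T|)%N.
  have := subset_leq_card (A := [set (0 : L); 1]) (B := T).
  rewrite cards2 eq_sym oner_neq0; apply; apply/subsetP => x.
  by rewrite !inE => /orP[] /eqP ->; [apply: sf0 | apply: sf1].
exists n => //; case: n cT => // cT; by rewrite cT in two.
Qed.

Lemma sf_Efix (L : finFieldType) (T : {set L}) :
  is_subfield T -> T = [set x | x ^+ #|T| == x].
Proof.
move=> sT; apply/eqP; rewrite eqEcard; apply/andP; split.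
  by apply/subsetP => x xT; rewrite inE sf_exp_card.
apply: card_Efix.
have := subset_leq_card (A := [set (0 : L); 1]) (B := T).
rewrite cards2 eq_sym oner_neq0; apply; apply/subsetP => x.
by rewrite !inE => /orP[] /eqP ->; [apply: sf0 | apply: sf1].
Qed.

Lemma arith_sum (p d : nat) : (1 < p)%N -> (0 < d)%N ->
  (p.-1 * (\sum_(j < d | (0 < j)%N) p ^ j) + p <= p ^ d)%N.
Proof.
move=> p1; elim: d => // d IH _.
rewrite big_mkcond big_ord_recr /= -big_mkcond /=.
case: d IH => [_|d IH].
  by rewrite big_ord0 /= muln0 add0n expn1.
have := IH isT; rewrite /= !expnS.
set s := (\sum_(i < d.+1 | _) _)%N; set u := (p ^ d)%N => H.
have hp : (p = p.-1.+1)%N by rewrite prednK // ltnW.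
move: H; rewrite hp; set r := p.-1; rewrite -hp => H.
rewrite hp in H *; nia.
Qed.

Lemma S_bound (p : nat) (L : finFieldType) (hchar : p \in [pchar L]) d : (0 < d)%N ->
  (p.-1 * #|[set g : L | (#|Fgen1 g| < p ^ d)%N]| + p <= p ^ d)%N.
Proof.
move=> d0; have pr := pcharf_prime hchar.
apply: (leq_trans _ (arith_sum (prime_gt1 pr) d0)); rewrite leq_add2r leq_mul2l; apply/orP; right.
apply: (@leq_trans #|\bigcup_(j < d | (0 < j)%N) [set x : L | x ^+ (p ^ j) == x]|).
  apply: subset_leq_card; apply/subsetP => g; rewrite inE => hg; apply/bigcupP.
  have sG := Fgen_sf [set g]; have [j j0 cj] := sf_card hchar sG.
  have jd : (j < d)%N by rewrite -(ltn_exp2l _ _ (prime_gt1 pr)) -cj.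
  exists (Ordinal jd) => //=; rewrite inE -cj sf_exp_card //.
  by apply: (subsetP (Fgen_sub [set g])); rewrite inE.
apply: leq_trans (card_bigcup_le _ _) _; apply: leq_sum => j j0.
by apply: card_Efix; rewrite -{1}(expn0 p) ltn_exp2l // prime_gt1.
Qed.

Theorem mainTheorem19 (p : nat) (L : finFieldType) (hp : prime p)
    (hchar : p \in [pchar L]) (alpha beta : L) (k N : nat) :
  alpha != 0 -> (k < N)%N -> (N < p)%N ->
  (exists2 lam : L, lam \in Fgen1 (alpha ^+ N) &
      (#|Fgen1 (alpha ^+ N)| <= #|Fgen1 ((beta + lam * alpha ^+ k) ^+ N)|)%N)
  /\
  (Fgen1 (alpha ^+ N) != Fgen [set alpha ^+ N; beta ^+ N; alpha ^+ k * beta ^+ (N - 1)] ->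
   exists2 lam : L, lam \in Fgen1 (alpha ^+ N) &
      (#|Fgen1 (alpha ^+ N)| < #|Fgen1 ((beta + lam * alpha ^+ k) ^+ N)|)%N).
Proof.
move=> a0 kN Np.
have N0 : (0 < N)%N by apply: leq_ltn_trans kN.
set K := Fgen1 (alpha ^+ N).
have sK : is_subfield K := Fgen_sf _.
have [d d0 cK] := sf_card hchar sK.
have KE := sf_Efix sK; rewrite cK in KE.
set c := alpha ^+ k.
have c0 : c != 0 by rewrite expf_neq0.
have eg l : beta + l * alpha ^+ k = c * l + beta by rewrite addrC mulrC.
set S := [set g : L | (#|Fgen1 g| < p ^ d)%N].
have SB := S_bound hchar d0; rewrite -/S in SB.
set Bad := [set l in K | (c * l + beta) ^+ N \in S].
have BadB : (#|Bad| <= N * #|S|)%N.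
  apply: (@leq_trans #|\bigcup_(s in S) [set l : L | (c * l + beta) ^+ N == s]|).
    apply: subset_leq_card; apply/subsetP => l; rewrite inE => /andP[_ hl].
    by apply/bigcupP; exists ((c * l + beta) ^+ N) => //; rewrite inE.
  apply: (leq_trans (card_bigcup_le (fun s => s \in S) _)).
  by rewrite mulnC -sum_nat_const; apply: leq_sum => s _; apply: fiber_card.
have NS : (N * #|S| <= p.-1 * #|S|)%N by rewrite leq_mul2r -ltnS prednK ?prime_gt0 // Np orbT.
have aK : alpha ^+ N \in K by apply: (subsetP (Fgen_sub _)); rewrite inE.
split.
  have : ~~ (K \subset Bad).
    apply/negP => /subset_leq_card; rewrite cK => H; move: (leq_trans H BadB); lia.
  case/subsetPn => l lK lB; exists l => //.
  by rewrite eg cK leqNgt; move: lB; rewrite inE lK /= inE.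
move=> hne.
set Bad2 := [set l in K | (#|Fgen1 ((c * l + beta) ^+ N)| <= p ^ d)%N].
set L2 := [set l : L | (l ^+ (p ^ d) == l) && (((c * l + beta) ^+ N) ^+ (p ^ d) == (c * l + beta) ^+ N)].
have fixK x : x \in K -> x ^+ (p ^ d) = x by rewrite {1}KE inE => /eqP.
have L2B : (#|L2| < N)%N.
  apply: hcount => //.
    have -> : c ^+ N = (alpha ^+ N) ^+ k by rewrite /c -!exprM mulnC.
    by rewrite -exprM mulnC exprM fixK.
  case=> f1 f2; move/negP: hne; apply; rewrite eqEsubset; apply/andP; split.
    apply: Fgen_min; first exact: Fgen_sf.
    by apply/subsetP => x; rewrite inE => /eqP ->; apply: (subsetP (Fgen_sub _)); rewrite !inE eqxx.
  apply: Fgen_min => //; apply/subsetP => x; rewrite !inE => /orP[/orP[]|] /eqP ->.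
  - exact: aK.
  - by rewrite KE inE f1.
  - by rewrite KE inE f2.
have B2 : Bad2 \subset Bad :|: L2.
  apply/subsetP => l; rewrite !inE => /andP[lK hl]; rewrite lK /=.
  rewrite leq_eqVlt in hl; case/orP: hl => [/eqP hl|->//]; apply/orP; right.
  rewrite fixK // eqxx /=.
  have sG := Fgen_sf [set (c * l + beta) ^+ N].
  have := sf_Efix sG; rewrite hl => E.
  have : (c * l + beta) ^+ N \in Fgen1 ((c * l + beta) ^+ N).
    by apply: (subsetP (Fgen_sub _)); rewrite inE.
  by rewrite /Fgen1 E inE.
have : ~~ (K \subset Bad2).
  apply/negP => /subset_leq_card; rewrite cK => H.
  have H2 := leq_trans H (subset_leq_card B2).
  have H3 := leq_trans H2 (leq_card_setU Bad L2).
  lia.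
case/subsetPn => l lK lB; exists l => //.
by rewrite eg cK ltnNge; move: lB; rewrite inE lK.
Qed.
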